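(* Let $G=(V,T,P,S)$ be a context-free grammar, let $W\subseteq V$, and let $F\subseteq W^*$ be a regular language. Then the language $L(G,F)$ of $G$ finalized by $F$ is context-free.
   Context: A context-free grammar $G=(V,T,P,S)$ has total alphabet $V$, terminal alphabet $T\subseteq V$, nonterminal alphabet $N=V-T$, finite rule set $P\subseteq N\times V^*$, start symbol $S\in N$; $\Rightarrow^*$ is its derivation relation and $\phi(G)=\{w\in V^*\mid S\Rightarrow^* w\}$ is its set of sentential forms. For $X\subseteq V$, $\pi_X$ denotes the homomorphism from $V^*$ to $X^*$ with $\pi_X(a)=a$ for $a\in X$ and $\pi_X(a)=\varepsilon$ for $a\in V-X$. For $W\subseteq V$ and $F\subseteq W^*$, set $\phi(G,F)=\{x\in\phi(G)\mid \pi_W(x)\in F\}$ and $L(G,F)=\{\pi_T(y)\mid y\in\phi(G,F),\ \pi_{N-W}(y)=\varepsilon\}$ (the language of $G$ finalized by $F$). *)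

(* Defs.v *)
From mathcomp Require Import all_boot.
Set Implicit Arguments. Unset Strict Implicit. Unset Printing Implicit Defensive.

(* A context-free grammar G = (V, T, P, S): the total alphabet V is a finType,
   the terminal alphabet is a set T of V, nonterminals N = V - T,
   the finite rule set P is a list of pairs (A, alpha), S is the start symbol. *)
Record cfg (V : finType) := CFG {
  cfg_term  : {set V};
  cfg_rules : seq (V * seq V);
  cfg_start : V }.

Definition cfg_wf (V : finType) (G : cfg V) : Prop :=
  (forall r, r \in cfg_rules G -> r.1 \notin cfg_term G) /\
  cfg_start G \notin cfg_term G.

Definition derive1 (V : finType) (G : cfg V) (x y : seq V) : Prop :=
  exists u v A alpha, (A, alpha) \in cfg_rules G /\
    x = u ++ A :: v /\ y = u ++ alpha ++ v.

Inductive derives (V : finType) (G : cfg V) : seq V -> seq V -> Prop :=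
  | derives_refl x : derives G x x
  | derives_step x y z : derive1 G x y -> derives G y z -> derives G x z.

Definition sentential (V : finType) (G : cfg V) (w : seq V) : Prop :=
  derives G [:: cfg_start G] w.

Definition proj (V : finType) (X : {set V}) (w : seq V) : seq V :=
  [seq a <- w | a \in X].

Definition cfg_lang (V : finType) (G : cfg V) (w : seq V) : Prop :=
  all (fun a => a \in cfg_term G) w /\ sentential G w.

Definition finalized_lang (V : finType) (G : cfg V) (W : {set V})
    (F : seq V -> Prop) (w : seq V) : Prop :=
  exists y, sentential G y /\ F (proj W y) /\
    proj (~: cfg_term G :\: W) y = [::] /\ w = proj (cfg_term G) y.

Definition regular_over (V : finType) (W : {set V}) (F : seq V -> Prop) : Prop :=
  exists (Q : finType) (q0 : Q) (delta : Q -> V -> Q) (acc : {set Q}),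
    forall w, F w <-> (all (fun a => a \in W) w /\ foldl delta q0 w \in acc).

(* L (a language over terminal alphabet T subset of V) is context-free:
   generated by some well-formed CFG whose terminal alphabet is (an injective
   copy of) T. *)
Definition context_free_over (V : finType) (T : {set V}) (L : seq V -> Prop) : Prop :=
  exists (V' : finType) (G' : cfg V') (iota : V -> V'),
    injective iota /\ cfg_wf G' /\ cfg_term G' = iota @: T /\
    (forall w, all (fun a => a \in T) w ->  (L w <-> cfg_lang G' (map iota w))) /\
    (forall w, L w -> all (fun a => a \in T) w).

(* Main.v *)
Require Import Defs.
From mathcomp Require Import all_boot.
Set Implicit Arguments. Unset Strict Implicit. Unset Printing Implicit Defensive.

Inductive gen (V : finType) (G : cfg V) : seq V -> seq V -> Prop :=
| gen_nil : gen G [::] [::]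
| gen_keep X u w : gen G u w -> gen G (X :: u) (X :: w)
| gen_rule A al u w1 w2 : (A, al) \in cfg_rules G -> gen G al w1 -> gen G u w2 ->
    gen G (A :: u) (w1 ++ w2).

Lemma gen_app (V : finType) (G : cfg V) a z1 b z2 :
  gen G a z1 -> gen G b z2 -> gen G (a ++ b) (z1 ++ z2).
Proof.
elim=> [//|X u w _ IH|A al u w1 w2 r g1 _ _ IH] g2 /=.
- by apply: gen_keep; apply: IH.
- rewrite -catA; apply: gen_rule r g1 _; exact: IH.
Qed.

Lemma gen_app_inv (V : finType) (G : cfg V) a b z :
  gen G (a ++ b) z -> exists z1 z2, z = z1 ++ z2 /\ gen G a z1 /\ gen G b z2.
Proof.
elim: a z => [|X a IH] z /=; first by move=> g; exists [::], z; split => //; split => //; exact: gen_nil.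
move=> g; inversion g as [|X0 u0 w0 gg|A0 al0 u0 w1 w2 rr ga gg]; subst.
- have [z1 [z2 [-> [g1 g2]]]] := IH _ gg.
  by exists (X :: z1), z2; split => //; split => //; apply: gen_keep.
- have [z1 [z2 [-> [g1 g2]]]] := IH _ gg.
  exists (w1 ++ z1), z2; rewrite catA; split => //; split => //.
  exact: gen_rule rr ga g1.
Qed.

Lemma gen_refl (V : finType) (G : cfg V) x : gen G x x.
Proof. elim: x => [|X x IH]; [exact: gen_nil | exact: gen_keep]. Qed.

Lemma gen_derives (V : finType) (G : cfg V) x y : derives G x y <-> gen G x y.
Proof.
split.
- elim=> [x0|x0 y0 z0 [u [v [A [al [r [-> ->]]]]]] _ IH]; first exact: gen_refl.
  have [z1 [z23 [-> [g1 g23]]]] := gen_app_inv IH.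
  have [z2 [z3 [-> [g2 g3]]]] := gen_app_inv g23.
  apply: gen_app g1 _. exact: gen_rule r g2 g3.
- elim=> [|X u w _ IH|A al u w1 w2 r _ IH1 _ IH2].
  + exact: derives_refl.
  + have H : forall p q, derives G p q -> derives G (X :: p) (X :: q).
      move=> p q; elim=> [p0|p0 q0 z0 [u0 [v0 [B [be [rr [-> ->]]]]]] _ IH0].
      * exact: derives_refl.
      * apply: derives_step IH0; exists (X :: u0), v0, B, be; done.
    exact: H.
  + apply: derives_step (_ : derive1 G (A :: u) (al ++ u)) _.
      by exists [::], u, A, al.
    have Hl : forall p q s, derives G p q -> derives G (p ++ s) (q ++ s).
      move=> p q s; elim=> [p0|p0 q0 z0 [u0 [v0 [B [be [rr [-> ->]]]]]] _ IH0].
      * exact: derives_refl.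
      * apply: derives_step IH0; exists u0, (v0 ++ s), B, be; rewrite -!catA; done.
    have Hr : forall p q s, derives G p q -> derives G (s ++ p) (s ++ q).
      move=> p q s; elim=> [p0|p0 q0 z0 [u0 [v0 [B [be [rr [-> ->]]]]]] _ IH0].
      * exact: derives_refl.
      * apply: derives_step IH0; exists (s ++ u0), v0, B, be; rewrite -!catA; done.
    have Ht : forall p q r, derives G p q -> derives G q r -> derives G p r.
      move=> p q r'; elim=> // p0 q0 z0 d _ IH0 h; apply: derives_step d _; exact: IH0.
    apply: Ht (Hl _ _ _ IH1) _; exact: Hr.
Qed.

Definition sym (V Q : finType) : finType := (V + option (Q * V * Q))%type.
Definition trip (V Q : finType) (p : Q) (X : V) (q : Q) : sym V Q := inr (Some (p, X, q)).

Inductive chain (V Q : finType) : Q -> seq V -> Q -> seq (sym V Q) -> Prop :=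
| chain_nil p : chain p [::] p [::]
| chain_cons p X r al q s : chain r al q s -> chain p (X :: al) q (trip p X r :: s).

Fixpoint chains (V Q : finType) (al : seq V) (p q : Q) : seq (seq (sym V Q)) :=
  match al with
  | [::] => if p == q then [:: [::]] else [::]
  | X :: al' => flatten [seq [seq trip p X r :: c | c <- chains al' r q] | r <- enum Q]
  end.

Lemma chainsP (V Q : finType) (al : seq V) (p q : Q) s :
  s \in chains al p q <-> chain p al q s.
Proof.
elim: al p s => [|X al IH] p s /=.
- split.
  + by case: eqP => [-> |_] //; rewrite inE => /eqP ->; exact: chain_nil.
  + by move=> c; inversion c; subst; rewrite eqxx inE.
- split.
  + move=> /flatten_mapP [r _] /mapP [c /IH hc ->]; exact: chain_cons.
  + move=> c; inversion c as [|p0 X0 r al0 q0 s0 hc]; subst.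
    apply/flatten_mapP; exists r; first by rewrite mem_enum.
    by apply/mapP; exists s0 => //; apply/IH.
Qed.

Definition rules' (V Q : finType) (T W : {set V}) (R : seq (V * seq V)) (S : V)
  (q0 : Q) (delta : Q -> V -> Q) (acc : {set Q}) : seq (sym V Q * seq (sym V Q)) :=
  flatten [seq flatten [seq flatten [seq [seq (trip p r.1 q, c) | c <- chains r.2 p q]
            | q <- enum Q] | p <- enum Q] | r <- R]
  ++ flatten [seq [seq (trip p a (if a \in W then delta p a else p), [:: (inl a : sym V Q)])
            | p <- enum Q] | a <- enum T]
  ++ flatten [seq [seq (trip p a (delta p a), [::]) | p <- enum Q] | a <- enum (W :\: T)]
  ++ [seq ((inr None : sym V Q), [:: trip q0 S f]) | f <- enum acc].

Lemma rules'P (V Q : finType) (T W : {set V}) (R : seq (V * seq V)) (S : V)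
  (q0 : Q) (delta : Q -> V -> Q) (acc : {set Q}) L Rhs :
  (L, Rhs) \in rules' T W R S q0 delta acc <->
  [\/ exists A al p q, [/\ (A, al) \in R, L = trip p A q & chain p al q Rhs],
      exists a p, [/\ a \in T, L = trip p a (if a \in W then delta p a else p) & Rhs = [:: inl a]],
      exists a p, [/\ a \in W, a \notin T, L = trip p a (delta p a) & Rhs = [::]] |
      exists f, [/\ f \in acc, L = inr None & Rhs = [:: trip q0 S f]]].
Proof.
rewrite /rules' !mem_cat; split.
- case/or4P.
  + move=> /flatten_mapP [[A al] rA] /flatten_mapP [p _] /flatten_mapP [q _] /mapP [c hc [-> ->]].
    by apply: Or41; exists A, al, p, q; split => //; apply/chainsP.
  + move=> /flatten_mapP [a aT] /mapP [p _ [-> ->]].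
    by apply: Or42; exists a, p; split => //; rewrite -mem_enum.
  + move=> /flatten_mapP [a aW] /mapP [p _ [-> ->]].
    move: aW; rewrite mem_enum inE => /andP [aT aW].
    by apply: Or43; exists a, p; split.
  + move=> /mapP [f hf [-> ->]].
    by apply: Or44; exists f; split => //; rewrite -mem_enum.
- case=> [[A [al [p [q [rA -> hc]]]]]|[a [p [aT -> ->]]]|[a [p [aW aT -> ->]]]|[f [hf -> ->]]].
  + apply/or4P; apply: Or41.
    apply/flatten_mapP; exists (A, al) => //.
    apply/flatten_mapP; exists p; first by rewrite mem_enum.
    apply/flatten_mapP; exists q; first by rewrite mem_enum.
    by apply/mapP; exists Rhs => //; apply/chainsP.
  + apply/or4P; apply: Or42.
    apply/flatten_mapP; exists a; first by rewrite mem_enum.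
    by apply/mapP; exists p => //; rewrite mem_enum.
  + apply/or4P; apply: Or43.
    apply/flatten_mapP; exists a; first by rewrite mem_enum inE aW aT.
    by apply/mapP; exists p => //; rewrite mem_enum.
  + apply/or4P; apply: Or44.
    by apply/mapP; exists f => //; rewrite mem_enum.
Qed.

Lemma map_eq_cat (A B : Type) (f : A -> B) w z1 z2 :
  map f w = z1 ++ z2 -> exists w1 w2, [/\ w = w1 ++ w2, map f w1 = z1 & map f w2 = z2].
Proof.
elim: z1 w => [|x z1 IH] w /=; first by move=> <-; exists [::], w.
case: w => [|a w] //= [<- /IH [w1 [w2 [-> <- <-]]]].
by exists (a :: w1), w2.
Qed.

Lemma gen_nil_inv (V : finType) (G : cfg V) w : gen G [::] w -> w = [::].
Proof. by move=> g; inversion g. Qed.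

Lemma gen_norule (V : finType) (G : cfg V) a w :
  (forall al, (a, al) \notin cfg_rules G) -> gen G [:: a] w -> w = [:: a].
Proof.
move=> nr g; inversion g as [|X u w0 g0|A al u w1 w2 r g1 g2]; subst.
- by rewrite (gen_nil_inv g0).
- by move: (nr al); rewrite r.
Qed.

Definition Gp (V Q : finType) (G : cfg V) (W : {set V}) (q0 : Q) (delta : Q -> V -> Q)
  (acc : {set Q}) : cfg (sym V Q) :=
  @CFG (sym V Q) [set (inl a : sym V Q) | a in cfg_term G]
    (rules' (cfg_term G) W (cfg_rules G) (cfg_start G) q0 delta acc) (inr None).

Lemma sound (V Q : finType) (G : cfg V) (W : {set V}) (q0 : Q) (delta : Q -> V -> Q)
  (acc : {set Q}) s w' :
  gen (Gp G W q0 delta acc) s w' ->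
  forall p al q w, chain p al q s -> w' = map inl w ->
  exists y, [/\ gen G al y, proj (~: cfg_term G :\: W) y = [::],
     proj (cfg_term G) y = w & foldl delta p (proj W y) = q].
Proof.
elim=> [|X u w0 _ _|A be u w1 w2 r gbe IHbe gu IHu] p al q w c.
- inversion c; subst; case: w => // _.
  by exists [::]; split => //; exact: gen_nil.
- by inversion c; subst; case: w.
- inversion c as [|p0 X r0 al' q0' u0 cu]; subst.
  move=> e; have [w1' [w2' [ew f1 f2]]] := map_eq_cat (esym e).
  rewrite {}ew.
  have [y2 [gy2 by2 ty2 fy2]] := IHu _ _ _ _ cu (esym f2).
  case/rules'P: r.
  + move=> [A' [al0 [p' [q' [rA eT hc]]]]]; case: eT => ep eX er.
    rewrite -ep -eX -er in hc rA.
    have [y1 [gy1 by1 ty1 fy1]] := IHbe _ _ _ _ hc (esym f1).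
    exists (y1 ++ y2); split.
    * exact: gen_rule rA gy1 gy2.
    * by rewrite /proj filter_cat -/(proj _ y1) -/(proj _ y2) by1 by2.
    * by rewrite /proj filter_cat -/(proj _ y1) -/(proj _ y2) ty1 ty2.
    * by rewrite /proj filter_cat -/(proj _ y1) -/(proj _ y2) foldl_cat fy1.
  + move=> [a [p' [aT eT ebe]]]; case: eT => ep eX er; subst p' a r0 be.
    have hw1 : w1 = [:: inl X].
      apply: (gen_norule (G := Gp G W q0 delta acc)) gbe => al0; apply/negP => /rules'P.
      by case=> [[? [? [? [? [? [] ]]]]]|[? [? [? [] ]]]|[? [? [? ? [] ]]]|[? [? [] ]]].
    rewrite hw1 in f1; case: w1' f1 => [|b [|]] //= [eb]; subst b.
    exists (X :: y2); split.
    * exact: gen_keep.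
    * by rewrite /proj /= in_setD in_setC aT andbF.
    * by rewrite /proj /= aT -/(proj _ y2) ty2.
    * by rewrite -fy2 /proj /=; case: (X \in W).
  + move=> [a [p' [aW aT eT ebe]]]; case: eT => ep eX er; subst p' a r0 be.
    have hw1 := gen_nil_inv gbe; rewrite hw1 in f1; case: w1' f1 => // _.
    exists (X :: y2); split.
    * exact: gen_keep.
    * by rewrite /proj /= in_setD aW.
    * by rewrite /proj /= (negbTE aT) -/(proj _ y2) ty2.
    * by rewrite /proj /= aW -/(proj _ y2).
  + by move=> [f [_ ]].
Qed.

Lemma complete (V Q : finType) (G : cfg V) (W : {set V}) (q0 : Q) (delta : Q -> V -> Q)
  (acc : {set Q}) al y :
  gen G al y -> proj (~: cfg_term G :\: W) y = [::] ->
  forall p, exists s, chain p al (foldl delta p (proj W y)) s /\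
    gen (Gp G W q0 delta acc) s (map inl (proj (cfg_term G) y)).
Proof.
elim=> [|X u w _ IH|A al' u w1 w2 r _ IH1 _ IH2] hb p.
- by exists [::]; split; [exact: chain_nil | exact: gen_nil].
- move: hb; rewrite /proj /= in_setD in_setC -!/(proj _ w).
  case XW: (X \in W); case XT: (X \in cfg_term G) => //= hb.
  + have [s [cs gs]] := IH hb (delta p X).
    exists (trip p X (delta p X) :: s); split; first exact: chain_cons.
    apply: (gen_rule (w1 := [:: inl X])) gs.
      apply/rules'P; apply: Or42; exists X, p; split => //; by rewrite XW.
    exact: gen_refl.
  + have [s [cs gs]] := IH hb (delta p X).
    exists (trip p X (delta p X) :: s); split; first exact: chain_cons.
    apply: (gen_rule (w1 := [::])) gs.
      apply/rules'P; apply: Or43; exists X, p; split => //; by rewrite XT.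
    exact: gen_nil.
  + have [s [cs gs]] := IH hb p.
    exists (trip p X p :: s); split; first exact: chain_cons.
    apply: (gen_rule (w1 := [:: inl X])) gs.
      apply/rules'P; apply: Or42; exists X, p; split => //; by rewrite XW.
    exact: gen_refl.
- have h1 : proj (~: cfg_term G :\: W) w1 = [::].
    by move: hb; rewrite /proj filter_cat; case: filter.
  have h2 : proj (~: cfg_term G :\: W) w2 = [::].
    by move: hb; rewrite /proj filter_cat -/(proj _ w1) h1.
  have [s1 [c1 g1]] := IH1 h1 p.
  have [s2 [c2 g2]] := IH2 h2 (foldl delta p (proj W w1)).
  exists (trip p A (foldl delta p (proj W w1)) :: s2); split.
    rewrite /proj filter_cat foldl_cat; exact: chain_cons.
  rewrite /proj filter_cat map_cat.
  apply: gen_rule g1 g2.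
  apply/rules'P; apply: Or41; exists A, al', p, (foldl delta p (proj W w1)); split => //.
Qed.

Theorem lemma1 (V : finType) (G : cfg V) (W : {set V}) (F : seq V -> Prop) :
  cfg_wf G -> regular_over W F ->
  context_free_over (cfg_term G) (finalized_lang G W F).
Proof.
move=> _ [Q [q0 [delta [acc hF]]]].
have notinr : forall x, (inr x : sym V Q) \notin [set (inl a : sym V Q) | a in cfg_term G].
  by move=> x; apply/imsetP => [[a _]].
exists (sym V Q), (Gp G W q0 delta acc), inl.
split; first by move=> a b [].
split.
  split; last exact: notinr.
  case=> L R /rules'P /= [[? [? [? [? [_ -> _]]]]]|[? [? [_ -> _]]]|[? [? [_ _ -> _]]]|[? [_ -> _]]];
    exact: notinr.
split; first by [].
split.
- move=> w wT; split.
  + move=> [y [sy [Fy [By ->]]]]; split.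
      apply/allP => x /mapP [a ha ->]; apply: imset_f.
      by move: ha; rewrite mem_filter => /andP [].
    move/gen_derives: sy => gy.
    have [s [cs gs]] := complete q0 delta acc gy By q0.
    inversion cs as [|p0 X r0 al0 q1 s0 cs0]; subst.
    inversion cs0; subst.
    apply/gen_derives; rewrite /Gp /=.
    rewrite -[map _ _]cats0; apply: gen_rule gs (gen_nil _).
    apply/rules'P; apply: Or44; exists (foldl delta q0 (proj W y)); split => //.
    by have /hF [] := Fy.
  + move=> [_ sd]; move/gen_derives: sd => g.
    inversion g as [|X u w0 g0 e1 e2|A al u w1 w2 r ga gu e1 e2].
      by subst; case: w wT g e2.
    subst.
    have [ [? [? [? [? [_ e _]]]]]|[? [? [_ e _]]]|[? [? [_ _ e _]]]|[f [hf _ eal]] ] := (rules'P _ _ _ _ _ _ _ _ _).1 r;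
      try (by []).
    subst al; rewrite (gen_nil_inv gu) cats0 in e2.
    have [y [gy By Ty fy]] := sound ga (@chain_cons V Q q0 (cfg_start G) f [::] f [::] (@chain_nil V Q f)) e2.
    exists y; split; first exact/gen_derives.
    split; last by [].
    apply/hF; split; last by rewrite fy.
    by apply/allP => x; rewrite mem_filter => /andP [].
- by move=> w [y [_ [_ [_ ->]]]]; apply/allP => x; rewrite mem_filter => /andP [].
Qed.
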